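(* Let $k\ge 1$, $d = 2^k$, and suppose $d-1$ is a prime number. Let $\Omega$ be a set with $d$ elements, $S_d=\mathrm{Aut}(\Omega)$, and let $G \subset S_d$ be a primitive solvable subgroup. Then every element $g \in G$ with $g \neq 1_G$ has at most $2$ fixed points on $\Omega$.
   Context: A subgroup $G \subset \mathrm{Aut}(\Omega)$ is primitive if it is transitive and the stabilizer $G_x$ of a point $x\in\Omega$ is a maximal subgroup of $G$. *)

(* Defs.v *)
From mathcomp Require Import all_boot all_fingroup all_solvable.
Set Implicit Arguments. Unset Strict Implicit. Unset Printing Implicit Defensive.
Local Open Scope group_scope.

Definition primitive_perm_group (Omega : finType) (G : {group {perm Omega}}) :=
  [transitive G, on [set: Omega] | 'P] /\
  (forall x : Omega, maximal 'C_G[x | 'P] G).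

(* Main.v *)
Require Import Defs.
From mathcomp Require Import all_boot all_fingroup all_solvable.


Theorem proposition2p3 (k : nat) (Omega : finType) (G : {group {perm Omega}}) :
  (1 <= k)%N -> prime (2 ^ k).-1 -> #|Omega| = (2 ^ k)%N ->
  primitive_perm_group G -> solvable G ->
  forall g : {perm Omega}, g \in G -> g != 1%g ->
    (#|[set x : Omega | g x == x]| <= 2)%N.
Proof.
Local Open Scope group_scope.
move=> k1 pr cardO [trG maxG] solG g Gg ntg.
case: (pickP (fun x => g x == x)) => [y /eqP gy | nofix]; last first.
  by rewrite (eq_card0 (A := [set x | g x == x])) // => x; rewrite inE nofix.
set H := 'C_G[y | 'P].
have sHG : H \subset G by apply: subsetIl.
have Hg : g \in H by rewrite inE Gg; apply/astab1P.
have ntG : G :!=: 1 by apply/trivgPn; exists g.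
have [N minN sNG] : {N : {group {perm Omega}} | minnormal N G & N \subset G}.
  by apply: mingroup_exists; rewrite ntG normG.
have [nNG ntN abN] := minnormal_solvable minN sNG solG.
have cNN : abelian N by case/is_abelemP: abN => r _ /abelem_abelian.
have Hy : forall h, h \in H -> h y = y by move=> h /setIP[_ /astab1P].
have trG' : forall z, exists2 a, a \in G & z = a y.
  move=> z; have := atransP trG y (in_setT y).
  move/setP/(_ z); rewrite in_setT => /imsetP[a Ga ->]; by exists a.
have nNH : H \subset 'N(N) by apply: subset_trans nNG.
have eHN : H <*> N = G.
  have maxH := maxG y.
  have sHN : H \subset H <*> N by apply: joing_subl.
  case/maxgroupP: maxH => _ mx.
  have sJG : H <*> N \subset G by rewrite join_subG sHG.
  case: (boolP (H <*> N \proper G)) => [prJ | ]; last first.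
    by rewrite properEneq sJG andbT negbK => /eqP.
  have eJ := mx _ prJ sHN.
  have sNH : N \subset H by move: (joing_subr H N); rewrite eJ.
  case/negP: ntN; apply/eqP/trivgP/subsetP => n Nn; rewrite inE.
  apply/eqP/permP => z; rewrite perm1.
  have [a Ga ->] := trG' z.
  have Nm : n ^ a^-1 \in N by rewrite memJ_norm ?groupV // (subsetP nNG).
  have := Hy _ (subsetP sNH _ Nm).
  rewrite conjgE invgK !permM => /(congr1 a).
  by rewrite -permM mulVg perm1.
have trN : forall z, exists2 n, n \in N & z = n y.
  move: eHN; rewrite norm_joinEl // => eHN z.
  have [a Ga ->] := trG' z.
  move: Ga; rewrite -eHN => /imset2P[h n Hh Nn ->].
  by exists n => //; rewrite permM Hy.
have cHN1 : forall h, h \in H -> (forall n, n \in N -> commute n h) -> h = 1.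
  move=> h Hh cn; apply/permP => z; rewrite perm1.
  have [n Nn ->] := trN z.
  by rewrite -permM (cn n Nn) permM Hy.
have fixN1 : forall n, n \in N -> n y = y -> n = 1.
  move=> n Nn ny; apply/permP => z; rewrite perm1; have [m Nm ->] := trN z.
  by rewrite -permM (centsP cNN m Nm n Nn) permM ny.
have injN : forall n1 n2, n1 \in N -> n2 \in N -> n1 y = n2 y -> n1 = n2.
  move=> n1 n2 N1 N2 e.
  have e1 : n1 * n2^-1 = 1.
    apply: fixN1; first by rewrite groupM ?groupV.
    by rewrite permM e -permM mulgV perm1.
  by apply/eqP; rewrite eq_mulgV1 e1.
have cardN : #|N| = (2 ^ k)%N.
  rewrite -cardO -(@card_in_imset _ _ (fun n : {perm Omega} => n y) _ injN) -cardsT; apply: eq_card => z; rewrite in_setT; have [n Nn ->] := trN z.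
  by apply/imsetP; exists n.
have gy' : g^-1 y = y by rewrite -{1}gy permK.
have eqfix : [set x | g x == x] = (fun n : {perm Omega} => n y) @: 'C_N[g].
  apply/setP => z; rewrite inE; apply/eqP/imsetP => [gz | [n /setIP[Nn /cent1P cng] ->]].
    have [n Nn zn] := trN z; exists n => //; rewrite inE Nn; apply/cent1P.
    apply/commgP/conjg_fixP; apply: injN => //.
      by rewrite memJ_norm // (subsetP nNG).
    by rewrite /= conjgE !permM gy' -zn gz.
  by rewrite -permM cng permM gy.
rewrite eqfix (@card_in_imset _ _ (fun n : {perm Omega} => n y) _ (sub_in2 (subsetP (subsetIl _ _)) injN)).
rewrite leqNgt; apply/negP => big.
set C := 'C_N[g] in big.
have C1 : 1 \in C by rewrite group1.
have [v Cv v1] : exists2 v, v \in C & v != 1.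
  have : (0 < #|C :\ (1%g : {perm Omega})|)%N by move: big; rewrite (cardsD1 (1%g : {perm Omega})) C1 /= add1n ltnS => /ltnW.
  by case/card_gt0P => v; rewrite in_setD1 => /andP[? ?]; exists v.
have [w [Cw w1 wv]] : exists w, [/\ w \in C, w != 1 & w != v].
  have : (0 < #|(C :\ (1%g : {perm Omega})) :\ v|)%N.
    by move: big; rewrite (cardsD1 (1%g : {perm Omega})) C1 (cardsD1 v (C :\ 1%g)) in_setD1 v1 Cv /= !add1n !ltnS.
  by case/card_gt0P => w; rewrite !in_setD1 => /and3P[? ? ?]; exists w.
have ntH : H :!=: 1 by apply/trivgPn; exists g.
have solH : solvable H := solvableS sHG solG.
have [M minM sMH] : {M : {group {perm Omega}} | minnormal M H & M \subset H}.
  by apply: mingroup_exists; rewrite ntH normG.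
have [nMH ntM abM] := minnormal_solvable minM sMH solH.
have [r pr_r rabM] := is_abelemP abM.
have rM := abelem_pgroup rabM.
have cMM := abelem_abelian rabM.
have CNM1 : 'C_N(M) = 1.
  have nCG : G \subset 'N('C_N(M)).
    rewrite -eHN join_subG normsI ?norms_cent //.
    by rewrite cents_norm // (subset_trans cNN) // centS // subsetIl.
  have /mingroupP[_ minN'] := minN.
  case: (eqVneq 'C_N(M) 1) => // ntC.
  have eC : 'C_N(M) = N by apply: minN'; [rewrite ntC nCG | exact: subsetIl].
  have sNC : N \subset 'C(M) by rewrite -eC subsetIr.
  case/negP: ntM; apply/eqP/trivgP/subsetP => m Mm; rewrite inE.
  apply/eqP/cHN1; first exact: (subsetP sMH).
  by move=> n Nn; apply: (centP (subsetP sNC n Nn)).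
have nNM : M \subset 'N(N) by apply: subset_trans nNH.
have actsN : [acts M, on N | 'J] by rewrite /= astabsJ.
have rp : r = (2 ^ k).-1.
  have := pgroup_fix_mod rM actsN.
  rewrite /= afixJ CNM1 cards1 cardN.
  move/eqP; rewrite eqn_mod_dvd ?expn_gt0 // subn1 => rdv.
  by apply/eqP; rewrite -(dvdn_prime2 pr_r pr).
have CNv : forall u, u \in C -> u \in N by move=> u /setIP[].
set O := orbit 'J M v.
have sON : O \subset N :\ 1%g.
  apply/subsetP => _ /imsetP[m Mm ->]; rewrite /= in_setD1 conjg_eq1 v1.
  by rewrite memJ_norm ?CNv // (subsetP nNM).
have [b oO] : {b | #|O| = (r ^ b)%N}.
  by apply: p_natP; apply: pnat_dvd rM; rewrite card_orbit dvdn_indexg.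
have cardN1 : #|N :\ 1%g| = (2 ^ k).-1.
  by rewrite -cardN (cardsD1 1%g N) group1 add1n.
have eO : O = N :\ 1%g.
  apply/eqP; rewrite eqEcard sON cardN1 oO -rp.
  case: b oO => [|[|b]] oO; last first.
  - have := subset_leq_card sON; rewrite oO cardN1 -rp => h.
    have r1 : (1 < r)%N by apply: prime_gt1.
    exfalso; move: h; rewrite expnS leqNgt; case/negP.
    rewrite -{1}(muln1 r) ltn_pmul2l ?prime_gt0 //.
    by rewrite -{1}(expn0 r) ltn_exp2l // ltnS.
  - by rewrite /= expnS expn0 muln1.
  - exfalso; move/card_orbit1: oO => eOv.
    have vC : v \in 'C_N(M).
      rewrite inE CNv //; apply/centP => m Mm; apply/commgP/conjg_fixP.
      have : v ^ m \in O by apply/imsetP; exists m.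
      by rewrite /O eOv => /set1P.
    by move: vC; rewrite CNM1 inE; apply/negP.
have inO : forall u, u \in N -> u != 1 -> exists2 m, m \in M & u = v ^ m.
  move=> u Nu u1; have : u \in O by rewrite eO in_setD1 u1 Nu.
  by case/imsetP => m Mm ->; exists m.
have stab1 : forall c, c \in M -> v ^ c = v -> c = 1.
  move=> c Mc vc; apply: cHN1 (subsetP sMH c Mc) _ => n Nn.
  case: (eqVneq n 1) => [-> | n1]; first exact/commute_sym/commute1.
  have [m Mm ->] := inO n Nn n1.
  apply/commgP/conjg_fixP.
  by rewrite -conjgM (centsP cMM m Mm c Mc) conjgM vc.
have cardM : #|M| = r.
  rewrite -(card_orbit_stab 'J M v) -/O eO cardN1 -rp.
  suff -> : 'C_M[v | 'J] = 1 by rewrite cards1 muln1.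
  apply/trivgP/subsetP => c /setIP[Mc /astab1P /= vc]; rewrite inE.
  by apply/eqP/stab1.
have [m Mm wm] := inO w (CNv w Cw) w1.
have m1 : m != 1 by apply: contraNneq wv => m1; rewrite wm m1 conjg1.
have nMg : g \in 'N(M) by apply: (subsetP nMH).
have vg : v ^ g = v by apply/conjg_fixP/commgP; case/setIP: Cv => _ /cent1P.
have wg : w ^ g = w by apply/conjg_fixP/commgP; case/setIP: Cw => _ /cent1P.
have mg : m ^ g = m.
  have Mmg : m ^ g \in M by rewrite memJ_norm.
  have : (m ^ g) * m^-1 = 1.
    apply: stab1; first by rewrite groupM ?groupV.
    have e : v ^ (m ^ g * m^-1) = ((v ^ g) ^ (m ^ g)) ^ m^-1 by rewrite vg conjgM.
    by rewrite e -(conjgM v g) -conjgC conjgM -wm wg wm conjgK.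
  by move/eqP; rewrite -eq_mulgV1 => /eqP.
have eMm : <[m]> = M.
  apply/eqP; rewrite eqEcard cycle_subG Mm cardM /=.
  have := order_dvdG Mm; rewrite cardM.
  have o1 : #[m] != 1%N by rewrite order_eq1.
  by move/(prime_nt_dvdP pr_r o1) => e; rewrite -orderE e.
have cgM : forall m', m' \in M -> commute m' g.
  move=> m'; rewrite -eMm => /cycleP[i ->].
  apply/commute_sym/commuteX/commute_sym/commgP/conjg_fixP/mg.
case/negP: ntg; apply/eqP/cHN1 => // n Nn.
case: (eqVneq n 1) => [-> | n1]; first exact/commute_sym/commute1.
have [m' Mm' ->] := inO n Nn n1.
apply/commgP/conjg_fixP.
by rewrite -conjgM (cgM m' Mm') conjgM vg.
Qed.
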